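(* Let $\mathcal C$ be an $R$-coring satisfying the left $\alpha$-condition. The following are equivalent: (i) $\mathrm{Rat}^{\mathcal C}({}^*\mathcal C)$ is dense in ${}^*\mathcal C$ in the $\mathcal C$-adic topology; (ii) $\mathrm{Rat}^{\mathcal C}({}^*\mathcal C)$ is dense in ${}^*\mathcal C$ in the finite topology; (iii) $\mathrm{Rat}^{\mathcal C}$ is an exact functor.
   Context: An $R$-coring is a triple $(\mathcal C,\Delta,\varepsilon)$ with $\mathcal C$ an $R$-bimodule and $\Delta:\mathcal C\to\mathcal C\otimes_R\mathcal C$, $\varepsilon:\mathcal C\to R$ coassociative and counital $R$-bimodule maps; write $\Delta(c)=c_{(1)}\otimes_R c_{(2)}$. ${}^*\mathcal C={}_R\mathrm{Hom}(\mathcal C,R)$ is a ring with product $(f\#g)(c)=g(c_{(1)}f(c_{(2)}))$ and unit $\varepsilon$. A right $\mathcal C$-comodule is a right $R$-module $N$ with a right $R$-linear coassociative counital map $N\to N\otimes_R\mathcal C$, $n\mapsto n_{[0]}\otimes n_{[1]}$; it is a right ${}^*\mathcal C$-module via $n\cdot f=n_{[0]}f(n_{[1]})$; in particular $\mathcal C$ is a right ${}^*\mathcal C$-module via $c\cdot f=c_{(1)}f(c_{(2)})$. $\mathcal C$ satisfies the left $\alpha$-condition if it is locally projective as a left $R$-module, equivalently for every right $R$-module $N$ the map $N\otimes_R\mathcal C\to\mathrm{Hom}_R({}^*\mathcal C,N)$, $n\otimes c\mapsto(f\mapsto nf(c))$, is injective; then the category $\mathcal M^{\mathcal C}$ of right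 comodules is a full subcategory of right ${}^*\mathcal C$-modules (equal to $\sigma[\mathcal C_{{}^*\mathcal C}]$). For a right ${}^*\mathcal C$-module $M$, $\mathrm{Rat}^{\mathcal C}(M)$ is the set of $m\in M$ for which there is $\sum_i m_i\otimes c_i\in M\otimes_R\mathcal C$ with $m\cdot f=\sum_i m_if(c_i)$ for all $f\in{}^*\mathcal C$; it is the largest ${}^*\mathcal C$-submodule of $M$ that is a right $\mathcal C$-comodule inducing the given action, and $\mathrm{Rat}^{\mathcal C}$ is a left exact functor from right ${}^*\mathcal C$-modules to $\mathcal M^{\mathcal C}$. Here ${}^*\mathcal C$ is regarded as a right module over itself. The finite topology on ${}^*\mathcal C={}_R\mathrm{Hom}(\mathcal C,R)$ has basic open sets $\{g\mid g(c)=f(c)\ \forall c\in F\}$, $F\subseteq\mathcal C$ finite. The $\mathcal C$-adic topology on ${}^*\mathcal C$ is the topology induced via $f\mapsto(c\mapsto c\cdot f)$ by the finite topology on $\mathrm{End}_{\mathbb Z}(\mathcal C)$; its basic open sets are $\{g\mid c\cdot g=c\cdot f\ \forall c\in F\}$, $F\subseteq\mathcal C$ finite. *)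

(* Defs.v *)
From HB Require Import structures.
From mathcomp Require Import all_boot all_order all_algebra.
From Stdlib Require List.
Set Implicit Arguments. Unset Strict Implicit. Unset Printing Implicit Defensive.
Import GRing.Theory.
Local Open Scope ring_scope.

Definition additive_fun (A B : zmodType) (f : A -> B) : Prop :=
  forall x y, f (x + y) = f x + f y.

Definition right_rmod (R : pzRingType) (N : zmodType) (ra : N -> R -> N) : Prop :=
  [/\ forall n m r, ra (n + m) r = ra n r + ra m r,
      forall n r s, ra n (r + s) = ra n r + ra n s,
      forall n r s, ra (ra n r) s = ra n (r * s)
    & forall n, ra n 1 = n].

Definition left_rmod (R : pzRingType) (C : zmodType) (la : R -> C -> C) : Prop :=
  [/\ forall r c d, la r (c + d) = la r c + la r d,
      forall r s c, la (r + s) c = la r c + la s c,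
      forall r s c, la r (la s c) = la (r * s) c
    & forall c, la 1 c = c].

Definition bimod (R : pzRingType) (C : zmodType)
    (la : R -> C -> C) (ra : C -> R -> C) : Prop :=
  [/\ left_rmod la, right_rmod ra & forall r c s, la r (ra c s) = ra (la r c) s].

(* Tensor products over R.  An element of N (x)_R C is represented by  *)
(* a finite formal sum  sum_i n_i (x) c_i  (a list of pairs); two such *)
(* representatives are equal in N (x)_R C iff every R-balanced         *)
(* biadditive map out of N x C takes the same value on them (universal *)
(* property of the tensor product).                                    *)

Definition tensor_eq (R : pzRingType) (N C : zmodType)
    (ra : N -> R -> N) (la : R -> C -> C) (t t' : seq (N * C)) : Prop :=
  forall (A : zmodType) (b : N -> C -> A),
    (forall n n' c, b (n + n') c = b n c + b n' c) ->
    (forall n c c', b n (c + c') = b n c + b n c') ->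
    (forall n r c, b (ra n r) c = b n (la r c)) ->
    \sum_(p <- t) b p.1 p.2 = \sum_(p <- t') b p.1 p.2.

Definition tensor3_eq (R : pzRingType) (C : zmodType)
    (la : R -> C -> C) (ra : C -> R -> C) (t t' : seq (C * C * C)) : Prop :=
  forall (A : zmodType) (b : C -> C -> C -> A),
    (forall x x' y z, b (x + x') y z = b x y z + b x' y z) ->
    (forall x y y' z, b x (y + y') z = b x y z + b x y' z) ->
    (forall x y z z', b x y (z + z') = b x y z + b x y z') ->
    (forall x r y z, b (ra x r) y z = b x (la r y) z) ->
    (forall x y r z, b x (ra y r) z = b x y (la r z)) ->
    \sum_(p <- t) b p.1.1 p.1.2 p.2 = \sum_(p <- t') b p.1.1 p.1.2 p.2.

(* R-corings.  Delta c is a representative  c_(1) (x) c_(2)  of an     *)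
(* element of C (x)_R C.                                               *)

Definition is_coring (R : pzRingType) (C : zmodType)
    (la : R -> C -> C) (ra : C -> R -> C)
    (Delta : C -> seq (C * C)) (eps : C -> R) : Prop :=
  [/\ bimod la ra,
      [/\
      (forall c d, tensor_eq ra la (Delta (c + d)) (Delta c ++ Delta d)),
      (forall r c, tensor_eq ra la (Delta (la r c))
                     [seq (la r p.1, p.2) | p <- Delta c])
      & (forall c r, tensor_eq ra la (Delta (ra c r))
                     [seq (p.1, ra p.2 r) | p <- Delta c])],
      [/\ additive_fun eps,
          forall r c, eps (la r c) = r * eps c
        & forall c r, eps (ra c r) = eps c * r],
      (forall c, tensor3_eq la ra
         (flatten [seq [seq (p.1, p.2, q.2) | p <- Delta q.1] | q <- Delta c])
         (flatten [seq [seq (q.1, p.1, p.2) | p <- Delta q.2] | q <- Delta c]))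
    &
      (forall c, \sum_(p <- Delta c) la (eps p.1) p.2 = c /\
                 \sum_(p <- Delta c) ra p.1 (eps p.2) = c)].

Definition in_dual (R : pzRingType) (C : zmodType) (la : R -> C -> C)
    (f : C -> R) : Prop :=
  additive_fun f /\ forall r c, f (la r c) = r * f c.

Definition cdot (R : pzRingType) (C : zmodType) (ra : C -> R -> C)
    (Delta : C -> seq (C * C)) (c : C) (f : C -> R) : C :=
  \sum_(p <- Delta c) ra p.1 (f p.2).

Definition sharp (R : pzRingType) (C : zmodType) (ra : C -> R -> C)
    (Delta : C -> seq (C * C)) (f g : C -> R) : C -> R :=
  fun c => g (cdot ra Delta c f).

(* the ring map R -> *C, r |-> eps(-) r ; it induces the right
   R-module structure of any right *C-module *)
Definition iota (R : pzRingType) (C : zmodType) (eps : C -> R) (r : R) : C -> R :=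
  fun c => eps c * r.

(* Left alpha-condition: for every right R-module N the map            *)
(*   N (x)_R C -> Hom_R( *C, N),  n (x) c |-> (f |-> n f(c))           *)
(* is injective.                                                       *)

Definition left_alpha (R : pzRingType) (C : zmodType) (la : R -> C -> C) : Prop :=
  forall (N : zmodType) (rn : N -> R -> N), right_rmod rn ->
  forall t t' : seq (N * C),
    (forall f, in_dual la f ->
       \sum_(p <- t) rn p.1 (f p.2) = \sum_(p <- t') rn p.1 (f p.2)) ->
    tensor_eq rn la t t'.

(* Right *C-modules: an additive group M with an action                *)
(* act : M -> (C -> R) -> M, the axioms being required for f, g in *C. *)

Definition right_dual_mod (R : pzRingType) (C : zmodType)
    (la : R -> C -> C) (ra : C -> R -> C)
    (Delta : C -> seq (C * C)) (eps : C -> R)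
    (M : zmodType) (act : M -> (C -> R) -> M) : Prop :=
  [/\ forall m m' f, in_dual la f -> act (m + m') f = act m f + act m' f,
      forall m f g, in_dual la f -> in_dual la g ->
        act m (fun c => f c + g c) = act m f + act m g,
      forall m f g, in_dual la f -> in_dual la g ->
        act (act m f) g = act m (sharp ra Delta f g)
    & forall m, act m eps = m].

Definition dual_mod_hom (R : pzRingType) (C : zmodType) (la : R -> C -> C)
    (M1 M2 : zmodType) (act1 : M1 -> (C -> R) -> M1)
    (act2 : M2 -> (C -> R) -> M2) (u : M1 -> M2) : Prop :=
  additive_fun u /\ forall m f, in_dual la f -> u (act1 m f) = act2 (u m) f.

(* Rat^C(M): m is rational iff there is  sum_i m_i (x) c_i in M (x)_R C
   with m.f = sum_i m_i f(c_i) for all f in *C  (here m_i f(c_i) means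
   m_i . iota (f c_i), the right R-module structure of M). *)
Definition Rat_mod (R : pzRingType) (C : zmodType) (la : R -> C -> C)
    (eps : C -> R) (M : zmodType) (act : M -> (C -> R) -> M) (m : M) : Prop :=
  exists s : seq (M * C), forall f, in_dual la f ->
    act m f = \sum_(p <- s) act p.1 (iota eps (f p.2)).

(* Rat^C( *C ), *C being a right module over itself:  g.f = g # f, and
   the right R-module structure of *C is (g r)(c) = g(c) r. *)
Definition Rat_dual (R : pzRingType) (C : zmodType) (la : R -> C -> C)
    (ra : C -> R -> C) (Delta : C -> seq (C * C)) (g : C -> R) : Prop :=
  exists s : seq ((C -> R) * C),
    (forall p, Stdlib.Lists.List.In p s -> in_dual la p.1) /\
    forall f, in_dual la f -> forall c,
      sharp ra Delta g f c = \sum_(p <- s) p.1 c * f p.2.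

Definition Rat_dense_Cadic (R : pzRingType) (C : zmodType) (la : R -> C -> C)
    (ra : C -> R -> C) (Delta : C -> seq (C * C)) : Prop :=
  forall f, in_dual la f -> forall F : seq C,
    exists g, [/\ in_dual la g, Rat_dual la ra Delta g &
                  forall c, c \in F -> cdot ra Delta c g = cdot ra Delta c f].

Definition Rat_dense_finite (R : pzRingType) (C : zmodType) (la : R -> C -> C)
    (ra : C -> R -> C) (Delta : C -> seq (C * C)) : Prop :=
  forall f, in_dual la f -> forall F : seq C,
    exists g, [/\ in_dual la g, Rat_dual la ra Delta g &
                  forall c, c \in F -> g c = f c].

Definition Rat_exact (R : pzRingType) (C : zmodType) (la : R -> C -> C)
    (ra : C -> R -> C) (Delta : C -> seq (C * C)) (eps : C -> R) : Prop :=
  forall (M1 M2 M3 : zmodType) (act1 : M1 -> (C -> R) -> M1)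
         (act2 : M2 -> (C -> R) -> M2) (act3 : M3 -> (C -> R) -> M3)
         (u : M1 -> M2) (v : M2 -> M3),
    right_dual_mod la ra Delta eps act1 ->
    right_dual_mod la ra Delta eps act2 ->
    right_dual_mod la ra Delta eps act3 ->
    dual_mod_hom la act1 act2 u -> dual_mod_hom la act2 act3 v ->
    injective u -> (forall m3, exists m2, v m2 = m3) ->
    (forall m2, v m2 = 0 <-> exists m1, u m1 = m2) ->
    [/\ forall m1 m1', Rat_mod la eps act1 m1 -> Rat_mod la eps act1 m1' ->
          u m1 = u m1' -> m1 = m1',
        forall m2, Rat_mod la eps act2 m2 -> v m2 = 0 ->
          exists m1, Rat_mod la eps act1 m1 /\ u m1 = m2
      & forall m3, Rat_mod la eps act3 m3 ->
          exists m2, Rat_mod la eps act2 m2 /\ v m2 = m3].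

(* Main.v *)
From HB Require Import structures.
From mathcomp Require Import all_boot all_order all_algebra.
From mathcomp Require Import boolp functions.
Require Import Defs.
Set Implicit Arguments. Unset Strict Implicit. Unset Printing Implicit Defensive.
Import GRing.Theory.
Local Open Scope ring_scope.

Definition zclosed (V : zmodType) (P : V -> Prop) :=
  [/\ P 0, forall x y, P x -> P y -> P (x + y) & forall x, P x -> P (- x)].

Record sub (V : zmodType) (P : V -> Prop) (H : zclosed P) :=
  Sub { sv : V; sP : P sv }.

HB.instance Definition _ (V : zmodType) (P : V -> Prop) (H : zclosed P) :=
  gen_eqMixin (sub H).
HB.instance Definition _ (V : zmodType) (P : V -> Prop) (H : zclosed P) :=
  gen_choiceMixin (sub H).

Section SubZ.
Variables (V : zmodType) (P : V -> Prop) (H : zclosed P).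
Lemma sub_eq (x y : sub H) : sv x = sv y -> x = y.
Proof.
case: x => x px; case: y => y py /= E; subst y.
by rewrite (Prop_irrelevance px py).
Qed.
Let P0 : P 0. Proof. by case: H. Qed.
Let PD x y : P x -> P y -> P (x + y). Proof. by case: H => _ h _; apply: h. Qed.
Let PN x : P x -> P (- x). Proof. by case: H => _ _ h; apply: h. Qed.
Definition sub0 : sub H := Sub H P0.
Definition subadd (x y : sub H) : sub H := Sub H (PD (sP x) (sP y)).
Definition subopp (x : sub H) : sub H := Sub H (PN (sP x)).
Let s_addrA : associative subadd.
Proof. by move=> x y z; apply: sub_eq; rewrite /= addrA. Qed.
Let s_addrC : commutative subadd.
Proof. by move=> x y; apply: sub_eq; rewrite /= addrC. Qed.
Let s_add0r : left_id sub0 subadd.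
Proof. by move=> x; apply: sub_eq; rewrite /= add0r. Qed.
Let s_addNr : left_inverse sub0 subopp subadd.
Proof. by move=> x; apply: sub_eq; rewrite /= addNr. Qed.
HB.instance Definition _ := GRing.isZmodule.Build (sub H) s_addrA s_addrC s_add0r s_addNr.

Lemma svD (x y : sub H) : sv (x + y) = sv x + sv y. Proof. by []. Qed.
Lemma sv0 : sv (0 : sub H) = 0. Proof. by []. Qed.
Lemma svN (x : sub H) : sv (- x) = - sv x. Proof. by []. Qed.
Lemma sv_sum I (s : seq I) (F : I -> sub H) :
  sv (\sum_(i <- s) F i) = \sum_(i <- s) sv (F i).
Proof.
elim: s => [|a s IH]; first by rewrite !big_nil.
by rewrite !big_cons svD IH.
Qed.
End SubZ.

Definition cls (V : zmodType) (S : V -> Prop) (x : V) : V -> Prop := fun y => S (y - x).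

Record quot (V : zmodType) (S : V -> Prop) (H : zclosed S) :=
  Quot { qset : V -> Prop; qP : exists x, qset = cls S x }.

HB.instance Definition _ (V : zmodType) (S : V -> Prop) (H : zclosed S) :=
  gen_eqMixin (quot H).
HB.instance Definition _ (V : zmodType) (S : V -> Prop) (H : zclosed S) :=
  gen_choiceMixin (quot H).

Section QuotZ.
Variables (V : zmodType) (S : V -> Prop) (H : zclosed S).
Let S0 : S 0. Proof. by case: H. Qed.
Let SD x y : S x -> S y -> S (x + y). Proof. by case: H => _ h _; apply: h. Qed.
Let SN x : S x -> S (- x). Proof. by case: H => _ _ h; apply: h. Qed.

Lemma quot_eq (q q' : quot H) : qset q = qset q' -> q = q'.
Proof.
case: q => X px; case: q' => Y py /= E; subst Y.
by rewrite (Prop_irrelevance px py).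
Qed.

Lemma cls_eq x y : S (x - y) -> cls S x = cls S y.
Proof.
move=> sxy; apply: funext => z; apply: propext; rewrite /cls; split=> h.
  by have := SD h sxy; rewrite addrA subrK.
have := SD h (SN sxy); rewrite opprB addrA subrK //.
Qed.

Definition pi (x : V) : quot H := Quot H (ex_intro _ x erefl).
Definition rep (q : quot H) : V := proj1_sig (cid (qP q)).
Lemma rep_spec q : qset q = cls S (rep q).
Proof. by rewrite /rep; case: (cid (qP q)). Qed.
Lemma pi_rep q : pi (rep q) = q.
Proof. by apply: quot_eq; rewrite /= rep_spec. Qed.
Lemma pi_eqP x y : pi x = pi y <-> S (x - y).
Proof.
split=> [E|h]; last by apply: quot_eq; apply: cls_eq.
have : cls S x x by rewrite /cls subrr.
have -> : cls S x = cls S y by have := congr1 (@qset _ _ H) E.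
by [].
Qed.
Lemma rep_pi x : S (rep (pi x) - x).
Proof. by apply/pi_eqP; rewrite pi_rep. Qed.
Lemma quot_ind (Q : quot H -> Prop) : (forall x, Q (pi x)) -> forall q, Q q.
Proof. by move=> h q; rewrite -(pi_rep q). Qed.

Definition qzero := pi 0.
Definition qadd q q' := pi (rep q + rep q').
Definition qopp q := pi (- rep q).
Lemma qaddE x y : qadd (pi x) (pi y) = pi (x + y).
Proof.
apply/pi_eqP; have := SD (rep_pi x) (rep_pi y).
by rewrite opprD addrACA.
Qed.
Lemma qoppE x : qopp (pi x) = pi (- x).
Proof. by apply/pi_eqP; have := SN (rep_pi x); rewrite opprB opprK addrC. Qed.
Let q_addrA : associative qadd.
Proof.
by elim/quot_ind=> x; elim/quot_ind=> y; elim/quot_ind=> z; rewrite !qaddE addrA.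
Qed.
Let q_addrC : commutative qadd.
Proof. by elim/quot_ind=> x; elim/quot_ind=> y; rewrite !qaddE addrC. Qed.
Let q_add0r : left_id qzero qadd.
Proof. by elim/quot_ind=> x; rewrite /qzero qaddE add0r. Qed.
Let q_addNr : left_inverse qzero qopp qadd.
Proof. by elim/quot_ind=> x; rewrite qoppE qaddE addNr. Qed.
HB.instance Definition _ := GRing.isZmodule.Build (quot H) q_addrA q_addrC q_add0r q_addNr.

Lemma piD x y : pi (x + y) = pi x + pi y. Proof. by rewrite -qaddE. Qed.
Lemma pi0 : pi 0 = 0. Proof. by []. Qed.
Lemma pi_sum I (s : seq I) (F : I -> V) : pi (\sum_(i <- s) F i) = \sum_(i <- s) pi (F i).
Proof.
elim: s => [|a s IH]; first by rewrite !big_nil.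
by rewrite !big_cons piD IH.
Qed.
Lemma pi_eq0 x : pi x = 0 <-> S x.
Proof. by rewrite -pi0 pi_eqP subr0. Qed.
End QuotZ.

Lemma fadd (T : Type) (M : zmodType) (f g : T -> M) x : (f + g) x = f x + g x.
Proof. by []. Qed.
Lemma fopp (T : Type) (M : zmodType) (f : T -> M) x : (- f) x = - f x.
Proof. by []. Qed.
Lemma fzero (T : Type) (M : zmodType) x : (0 : T -> M) x = 0.
Proof. by []. Qed.
Lemma fsum (T : Type) (M : zmodType) (I : Type) (s : seq I) (F : I -> T -> M) x :
  (\sum_(i <- s) F i) x = \sum_(i <- s) F i x.
Proof.
elim: s => [|a s IH]; first by rewrite !big_nil.
by rewrite !big_cons fadd IH.
Qed.

Lemma additive0 (A B : zmodType) (f : A -> B) : additive_fun f -> f 0 = 0.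
Proof. by move=> H; apply: (addrI (f 0)); rewrite -H !addr0. Qed.

Lemma additive_sum (A B : zmodType) (f : A -> B) (I : Type) (s : seq I) (F : I -> A) :
  additive_fun f -> f (\sum_(i <- s) F i) = \sum_(i <- s) f (F i).
Proof.
move=> H; elim: s => [|a s IH]; first by rewrite !big_nil additive0.
by rewrite !big_cons H IH.
Qed.

Lemma additiveN (A B : zmodType) (f : A -> B) x : additive_fun f -> f (- x) = - f x.
Proof.
by move=> H; apply: (addrI (f x)); rewrite -H subrr addrN additive0.
Qed.

Lemma sum_flat_map (A : zmodType) (I J K : Type) (t : seq I) (s : I -> seq J)
  (g : I -> J -> K) (F : K -> A) :
  \sum_(x <- flatten [seq [seq g q p | p <- s q] | q <- t]) F x =
  \sum_(q <- t) \sum_(p <- s q) F (g q p).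
Proof. by rewrite big_flatten big_map; apply: eq_bigr => q _; rewrite big_map. Qed.

Lemma In_map (I J : Type) (f : I -> J) (s : seq I) y :
  List.In y (map f s) -> exists x, f x = y /\ List.In x s.
Proof.
elim: s => [|a s IH] //= [<-|/IH [x [<- hx]]]; first by exists a; split=> //; left.
by exists x; split=> //; right.
Qed.

Section Base.
Variables (R : pzRingType) (C : zmodType) (la : R -> C -> C) (ra : C -> R -> C)
  (Delta : C -> seq (C * C)) (eps : C -> R).
Hypothesis Hc : is_coring la ra Delta eps.

Let Hbi : bimod la ra. Proof. by case: Hc. Qed.
Lemma laD r c d : la r (c + d) = la r c + la r d.
Proof. by case: Hbi => -[]. Qed.
Lemma laDl r s c : la (r + s) c = la r c + la s c.
Proof. by case: Hbi => -[]. Qed.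
Lemma laM r s c : la r (la s c) = la (r * s) c.
Proof. by case: Hbi => -[]. Qed.
Lemma la1 c : la 1 c = c.
Proof. by case: Hbi => -[]. Qed.
Lemma raD c d r : ra (c + d) r = ra c r + ra d r.
Proof. by case: Hbi => _ []. Qed.
Lemma raDr c r s : ra c (r + s) = ra c r + ra c s.
Proof. by case: Hbi => _ []. Qed.
Lemma raM c r s : ra (ra c r) s = ra c (r * s).
Proof. by case: Hbi => _ []. Qed.
Lemma ra1 c : ra c 1 = c.
Proof. by case: Hbi => _ []. Qed.
Lemma la_ra r c s : la r (ra c s) = ra (la r c) s.
Proof. by case: Hbi. Qed.

Lemma la_add r : additive_fun (la r). Proof. exact: laD. Qed.
Lemma la_addl c : additive_fun (la^~ c). Proof. by move=> ??; apply: laDl. Qed.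
Lemma ra_add r : additive_fun (ra^~ r). Proof. by move=> ??; apply: raD. Qed.
Lemma ra_addr c : additive_fun (ra c). Proof. exact: raDr. Qed.

Lemma la0 r : la r 0 = 0. Proof. exact: additive0 (la_add r). Qed.
Lemma la0l c : la 0 c = 0. Proof. exact: additive0 (la_addl c). Qed.
Lemma ra0 r : ra 0 r = 0. Proof. exact: additive0 (ra_add r). Qed.
Lemma ra0r c : ra c 0 = 0. Proof. exact: additive0 (ra_addr c). Qed.

Lemma eps_add : additive_fun eps. Proof. by case: Hc => _ _ []. Qed.
Lemma eps_la r c : eps (la r c) = r * eps c. Proof. by case: Hc => _ _ []. Qed.
Lemma eps_ra c r : eps (ra c r) = eps c * r. Proof. by case: Hc => _ _ []. Qed.

Lemma counitl c : \sum_(p <- Delta c) la (eps p.1) p.2 = c.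
Proof. by case: Hc => _ _ _ _ H; case: (H c). Qed.
Lemma counitr c : \sum_(p <- Delta c) ra p.1 (eps p.2) = c.
Proof. by case: Hc => _ _ _ _ H; case: (H c). Qed.

Definition balanced (A : zmodType) (b : C -> C -> A) :=
  [/\ forall n n' c, b (n + n') c = b n c + b n' c,
      forall n c c', b n (c + c') = b n c + b n c'
    & forall n r c, b (ra n r) c = b n (la r c)].

Lemma DeltaD (A : zmodType) (b : C -> C -> A) c d : balanced b ->
  \sum_(p <- Delta (c + d)) b p.1 p.2 =
  \sum_(p <- Delta c) b p.1 p.2 + \sum_(p <- Delta d) b p.1 p.2.
Proof.
case=> h1 h2 h3; case: Hc => _ [H _ _] _ _ _.
by rewrite (H c d A b h1 h2 h3) big_cat.
Qed.

Lemma Delta0 (A : zmodType) (b : C -> C -> A) : balanced b ->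
  \sum_(p <- Delta 0) b p.1 p.2 = 0.
Proof.
move=> hb; have := DeltaD 0 0 hb; rewrite addr0 => E.
by apply: (addrI (\sum_(p <- Delta 0) b p.1 p.2)); rewrite addr0 -E.
Qed.

Lemma Delta_sum (A : zmodType) (b : C -> C -> A) I (s : seq I) (F : I -> C) :
  balanced b ->
  \sum_(p <- Delta (\sum_(i <- s) F i)) b p.1 p.2 =
  \sum_(i <- s) \sum_(p <- Delta (F i)) b p.1 p.2.
Proof.
move=> hb; elim: s => [|a s IH]; first by rewrite !big_nil Delta0.
by rewrite !big_cons DeltaD // IH.
Qed.

Lemma Delta_la (A : zmodType) (b : C -> C -> A) r c : balanced b ->
  \sum_(p <- Delta (la r c)) b p.1 p.2 = \sum_(p <- Delta c) b (la r p.1) p.2.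
Proof.
case=> h1 h2 h3; case: Hc => _ [_ H _] _ _ _.
by rewrite (H r c A b h1 h2 h3) big_map.
Qed.

Lemma Delta_ra (A : zmodType) (b : C -> C -> A) c r : balanced b ->
  \sum_(p <- Delta (ra c r)) b p.1 p.2 = \sum_(p <- Delta c) b p.1 (ra p.2 r).
Proof.
case=> h1 h2 h3; case: Hc => _ [_ _ H] _ _ _.
by rewrite (H c r A b h1 h2 h3) big_map.
Qed.


Notation dual := (in_dual la).
Notation cd := (cdot ra Delta).
Notation sh := (sharp ra Delta).

Lemma dual_add f : dual f -> additive_fun f. Proof. by case. Qed.
Lemma dual_la f r c : dual f -> f (la r c) = r * f c. Proof. by case=> _ ->. Qed.
Lemma dual0v f : dual f -> f 0 = 0. Proof. by move/dual_add/additive0. Qed.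
Lemma dual_sumv f I (s : seq I) F : dual f -> f (\sum_(i <- s) F i) = \sum_(i <- s) f (F i).
Proof. by move/dual_add/additive_sum. Qed.

Lemma dual_eps : dual eps.
Proof. split; [exact: eps_add | exact: eps_la]. Qed.
Lemma dual0 : dual (0 : C -> R).
Proof. by split=> [x y|r c]; rewrite !fzero ?addr0 ?mulr0. Qed.
Lemma dual_addf f g : dual f -> dual g -> dual (f + g).
Proof.
move=> [f1 f2] [g1 g2]; split=> [x y|r c]; rewrite !fadd.
  by rewrite f1 g1 addrACA.
by rewrite f2 g2 mulrDr.
Qed.
Lemma dual_oppf f : dual f -> dual (- f).
Proof.
move=> [f1 f2]; split=> [x y|r c]; rewrite !fopp.
  by rewrite f1 opprD.
by rewrite f2 mulrN.
Qed.
Lemma dual_sumf I (s : seq I) (F : I -> C -> R) : (forall i, List.In i s -> dual (F i)) ->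
  dual (\sum_(i <- s) F i).
Proof.
elim: s => [|a s IH] H; first by rewrite big_nil; exact: dual0.
rewrite big_cons; apply: dual_addf; first by apply: H; left.
by apply: IH => i hi; apply: H; right.
Qed.
Lemma dual_mulr g r : dual g -> dual (fun c => g c * r).
Proof.
move=> [g1 g2]; split=> [x y|s c]; first by rewrite g1 mulrDl.
by rewrite g2 mulrA.
Qed.
Lemma dual_iota r : dual (iota eps r).
Proof. exact: (dual_mulr r dual_eps). Qed.

Lemma bal_cdot g : dual g -> balanced (fun x y => ra x (g y)).
Proof.
move=> gD; split=> [n n' c|n c c'|n r c]; first by rewrite raD.
  by rewrite (dual_add gD) raDr.
by rewrite raM (dual_la _ _ gD).
Qed.

Lemma cdotD g c d : dual g -> cd (c + d) g = cd c g + cd d g.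
Proof. by move=> gD; rewrite /cdot (DeltaD _ _ (bal_cdot gD)). Qed.
Lemma cdot0 g : dual g -> cd 0 g = 0.
Proof. by move=> gD; rewrite /cdot (Delta0 (bal_cdot gD)). Qed.
Lemma cdotN g c : dual g -> cd (- c) g = - cd c g.
Proof. by move=> gD; apply: (additiveN (f := cd^~ g)) => x y; apply: cdotD. Qed.
Lemma cdot_la g r c : dual g -> cd (la r c) g = la r (cd c g).
Proof.
move=> gD; rewrite /cdot (Delta_la _ _ (bal_cdot gD)) (additive_sum _ _ (la_add r)).
by apply: eq_bigr => p _; rewrite la_ra.
Qed.
Lemma cdot_addr c g h : cd c (g + h) = cd c g + cd c h.
Proof. by rewrite /cdot -big_split; apply: eq_bigr => p _; rewrite fadd raDr. Qed.
Lemma cdot_0r c : cd c 0 = 0.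
Proof. by rewrite /cdot big1 // => p _; rewrite fzero ra0r. Qed.
Lemma cdot_oppr c g : cd c (- g) = - cd c g.
Proof.
apply: (addrI (cd c g)); rewrite -cdot_addr subrr.
have -> : g + - g = 0 by rewrite subrr.
by rewrite cdot_0r.
Qed.
Lemma cdot_sumr c I (s : seq I) (F : I -> C -> R) : cd c (\sum_(i <- s) F i) = \sum_(i <- s) cd c (F i).
Proof.
elim: s => [|a s IH]; first by rewrite !big_nil cdot_0r.
by rewrite !big_cons cdot_addr IH.
Qed.
Lemma cdot_eps c : cd c eps = c.
Proof. exact: counitr. Qed.
Lemma cdot_iota c r : cd c (iota eps r) = ra c r.
Proof.
rewrite /cdot /iota; under eq_bigr do rewrite -raM.
by rewrite -(additive_sum _ _ (ra_add r)) counitr.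
Qed.
Lemma eps_cdot g c : dual g -> eps (cd c g) = g c.
Proof.
move=> gD; rewrite /cdot (additive_sum _ _ eps_add).
under eq_bigr do rewrite eps_ra.
rewrite -{2}(counitl c) (dual_sumv _ _ gD).
by apply: eq_bigr => p _; rewrite (dual_la _ _ gD).
Qed.
Lemma sharp_iota g r : dual g -> sh g (iota eps r) = fun c => g c * r.
Proof. by move=> gD; apply: funext => c; rewrite /sharp /iota eps_cdot. Qed.
Lemma dual_sharp m f : dual m -> dual f -> dual (sh m f).
Proof.
move=> mD fD; split=> [x y|r c]; rewrite /sharp.
  by rewrite cdotD // (dual_add fD).
by rewrite cdot_la // (dual_la _ _ fD).
Qed.

Lemma cdot_sharp c m f : dual m -> dual f -> cd c (sh m f) = cd (cd c m) f.
Proof.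
move=> mD fD.
have Hco : tensor3_eq la ra
         (flatten [seq [seq (p.1, p.2, q.2) | p <- Delta q.1] | q <- Delta c])
         (flatten [seq [seq (q.1, p.1, p.2) | p <- Delta q.2] | q <- Delta c]).
  by case: Hc => _ _ _ H _; apply: H.
have E := Hco C (fun x y z => ra x (f (ra y (m z))))
   (fun x x' y z => raD _ _ _)
   (fun x y y' z => ltac:(by rewrite /= raD (dual_add fD) raDr))
   (fun x y z z' => ltac:(by rewrite /= (dual_add mD) raDr (dual_add fD) raDr))
   (fun x r y z => ltac:(by rewrite /= raM -la_ra (dual_la _ _ fD)))
   (fun x y r z => ltac:(by rewrite /= raM (dual_la _ _ mD))).
rewrite !sum_flat_map /= in E.
transitivity (\sum_(q <- Delta c) \sum_(p <- Delta q.2) ra q.1 (f (ra p.1 (m p.2)))).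
  rewrite /cdot; apply: eq_bigr => q _; rewrite /sharp /cdot.
  by rewrite (dual_sumv _ _ fD) (additive_sum _ _ (ra_addr _)).
rewrite -E /cdot (Delta_sum _ _ (bal_cdot fD)); apply: eq_bigr => q _.
by rewrite (Delta_ra _ _ (bal_cdot fD)).
Qed.

Lemma eq_big_In (A : zmodType) I (s : seq I) (F G : I -> A) :
  (forall i, List.In i s -> F i = G i) -> \sum_(i <- s) F i = \sum_(i <- s) G i.
Proof.
elim: s => [|a s IH] H; first by rewrite !big_nil.
by rewrite !big_cons H; [rewrite IH // => i hi; apply: H; right | left].
Qed.

Section Mod.
Variables (M : zmodType) (act : M -> (C -> R) -> M).
Hypothesis Hm : right_dual_mod la ra Delta eps act.

Lemma act_add m f g : dual f -> dual g -> act m (f + g) = act m f + act m g.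
Proof. by case: Hm => _ H _ _; apply: H. Qed.
Lemma act0 m : act m 0 = 0.
Proof.
apply: (addrI (act m 0)); rewrite -act_add ?addr0 //; exact: dual0.
Qed.
Lemma act_sum m I (s : seq I) (F : I -> C -> R) :
  (forall i, List.In i s -> dual (F i)) ->
  act m (\sum_(i <- s) F i) = \sum_(i <- s) act m (F i).
Proof.
elim: s => [|a s IH] H; first by rewrite !big_nil act0.
rewrite !big_cons act_add; first by rewrite IH // => i hi; apply: H; right.
  by apply: H; left.
by apply: dual_sumf => i hi; apply: H; right.
Qed.
Lemma act_comp m f g : dual f -> dual g -> act (act m f) g = act m (sh f g).
Proof. by case: Hm => _ _ H _; apply: H. Qed.
Lemma act_eps m : act m eps = m.
Proof. by case: Hm. Qed.

Lemma RatAct m g : dual g -> Rat_dual la ra Delta g -> Rat_mod la eps act (act m g).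
Proof.
move=> gD [s [Hs Hsh]].
exists [seq (act m p.1, p.2) | p <- s] => f fD; rewrite big_map act_comp //.
have -> : sh g f = \sum_(p <- s) (fun c => p.1 c * f p.2).
  by apply: funext => c; rewrite fsum Hsh.
rewrite act_sum; last by move=> p hp; apply: dual_mulr; apply: Hs.
apply: eq_big_In => p hp /=.
by rewrite (act_comp _ (Hs _ hp) (dual_iota _)) (sharp_iota _ (Hs _ hp)).
Qed.

Lemma Rat_fix m (s : seq (M * C)) g :
  (forall f, dual f -> act m f = \sum_(p <- s) act p.1 (iota eps (f p.2))) ->
  dual g -> (forall c, c \in [seq p.2 | p <- s] -> g c = eps c) ->
  act m g = m.
Proof.
move=> Hs gD Hg; rewrite Hs //.
rewrite -[RHS](act_eps m) (Hs eps dual_eps); apply: eq_big_seq => p hp.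
by rewrite Hg // map_f.
Qed.
End Mod.

Lemma dense_exact : Rat_dense_finite la ra Delta -> Rat_exact la ra Delta eps.
Proof.
move=> HD M1 M2 M3 act1 act2 act3 u v H1 H2 H3 [uA uL] [vA vL] uI vS Hex.
split.
- by move=> m1 m1' _ _; apply: uI.
- move=> m2 [s Hs] /Hex [m1 Hm1].
  have [g [gD gR Hg]] := HD eps dual_eps [seq p.2 | p <- s].
  exists (act1 m1 g); split; first exact: RatAct.
  by rewrite uL // Hm1 (Rat_fix H2 Hs).
- move=> m3 [s Hs]; have [m2 Hm2] := vS m3.
  have [g [gD gR Hg]] := HD eps dual_eps [seq p.2 | p <- s].
  exists (act2 m2 g); split; first exact: RatAct.
  by rewrite vL // Hm2 (Rat_fix H3 Hs).
Qed.

Lemma cadic_finite : Rat_dense_Cadic la ra Delta -> Rat_dense_finite la ra Delta.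
Proof.
move=> HD f fD F; have [g [gD gR Hg]] := HD f fD F.
exists g; split=> // c hc.
by rewrite -(eps_cdot c gD) Hg // eps_cdot.
Qed.

Lemma finite_cadic : Rat_dense_finite la ra Delta -> Rat_dense_Cadic la ra Delta.
Proof.
move=> HD f fD F.
have [g [gD gR Hg]] := HD f fD (flatten [seq [seq p.2 | p <- Delta c] | c <- F]).
exists g; split=> // c hc; rewrite /cdot; apply: eq_big_seq => p hp.
rewrite Hg //; apply/flattenP; exists [seq p.2 | p <- Delta c]; last exact: map_f.
exact: map_f.
Qed.

Lemma sum_ind (A : zmodType) m i (G : nat -> A) :
  \sum_(0 <= j < m) (if i == j then G j else 0) = if (i < m)%N then G i else 0.
Proof.
rewrite -[RHS](big_nat1_eq (@GRing.add A) G i 0 m) big_mkcond; apply: eq_bigr => j _.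
by rewrite eq_sym.
Qed.

Section LP.
Variable D : seq C.
Let m := size D.
Let Dn i := nth 0 D i.
Definition SP (x : nat -> C) := exists L : seq ((C -> R) * C),
  (forall p, List.In p L -> dual p.1) /\
  x = fun i => \sum_(p <- L) la (p.1 (Dn i)) p.2.

Lemma SP_closed : zclosed SP.
Proof.
split.
- exists [::]; split=> //; apply: funext => i; by rewrite big_nil.
- move=> x y [L [HL ->]] [L' [HL' ->]]; exists (L ++ L'); split.
    by move=> p hp; case: (List.in_app_or _ _ _ hp) => ?; [apply: HL | apply: HL'].
  by apply: funext => i; rewrite fadd big_cat.
- move=> x [L [HL ->]]; exists [seq (p.1, - p.2) | p <- L]; split.
    by move=> p hp; have [q [E hq]] := In_map hp; rewrite -E; exact: (HL q hq).
  apply: (@funext nat C) => i; rewrite fopp big_map -sumrN; apply: eq_bigr => p _.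
  by rewrite (additiveN _ (la_add _)).
Qed.

Let A := quot SP_closed.
Definition NP (n : C -> A) := additive_fun n.
Lemma NP_closed : zclosed NP.
Proof.
split.
- by move=> x y; rewrite !fzero addr0.
- by move=> x y hx hy c d; rewrite !fadd hx hy addrACA.
- by move=> x hx c d; rewrite !fopp hx opprD.
Qed.
Let N := sub NP_closed.

Lemma rn_proof (n : N) r : NP (fun c => sv n (la r c)).
Proof. by move=> c d; rewrite laD (sP n). Qed.
Definition rn (n : N) r : N := Sub NP_closed (rn_proof n r).

Lemma rn_mod : right_rmod rn.
Proof.
split.
- by move=> n n' r; apply: sub_eq; apply: funext => c.
- by move=> n r s; apply: sub_eq; apply: funext => c; rewrite /= laDl (sP n).
- by move=> n r s; apply: sub_eq; apply: funext => c; rewrite /= laM.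
- by move=> n; apply: sub_eq; apply: funext => c; rewrite /= la1.
Qed.

Definition ej (j : nat) (c : C) : nat -> C := fun i => if i == j then c else 0.
Lemma nj_proof j : NP (fun c => pi SP_closed (ej j c)).
Proof.
move=> c d; rewrite -piD; congr pi; apply: funext => i.
by rewrite fadd /ej; case: (i == j); rewrite ?addr0.
Qed.
Definition nj j : N := Sub NP_closed (nj_proof j).

Lemma sum_ej (G : nat -> C) :
  \sum_(0 <= j < m) ej j (G j) = fun i => if (i < m)%N then G i else 0.
Proof. by apply: funext => i; rewrite fsum /ej sum_ind. Qed.

Lemma loc_proj : left_alpha la -> exists L : seq ((C -> R) * C),
  (forall p, List.In p L -> dual p.1) /\
  forall d, d \in D -> d = \sum_(p <- L) la (p.1 d) p.2.
Proof.
move=> Hal.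
pose t := [seq (nj j, Dn j) | j <- index_iota 0 m].
have Ht : tensor_eq rn la t [::].
  apply: Hal; first exact: rn_mod.
  move=> f fD; rewrite big_nil big_map; apply: sub_eq; rewrite sv_sum sv0.
  apply: funext => c; rewrite fsum fzero /= -pi_sum.
  apply/pi_eq0; exists [:: (f, c)]; split; first by move=> p [<-|].
  rewrite sum_ej; apply: funext => i; rewrite big_seq1 /=.
  case: ifP => // /negbT; rewrite -leqNgt => hi.
  by rewrite /Dn nth_default // (dual0v fD) la0l.
have := Ht A (fun n c => sv n c) (fun n n' c => erefl)
  (fun n c c' => sP n c c') (fun n r c => erefl).
rewrite big_nil big_map /= -pi_sum sum_ej => /pi_eq0 [L [HL E]].
exists L; split=> // d hd.
have := congr1 (fun x => x (index d D)) E => /=.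
by rewrite index_mem hd /Dn nth_index.
Qed.
End LP.

Section DualSub.
Variables (P : (C -> R) -> Prop) (HP : zclosed P).
Hypothesis PD : forall g, P g -> dual g.
Hypothesis PS : forall g h, P g -> dual h -> P (sh g h).
Definition actP (g : sub HP) (h : C -> R) : sub HP :=
  match pselect (dual h) with
  | left hD => Sub HP (PS (sP g) hD)
  | right _ => g end.
Lemma actPE g h : dual h -> sv (actP g h) = sh (sv g) h.
Proof. by move=> hD; rewrite /actP; case: pselect. Qed.
Lemma actP_mod : right_dual_mod la ra Delta eps actP.
Proof.
split.
- move=> m m' h hD; apply: sub_eq; rewrite svD !actPE // svD.
  by apply: (@funext C R) => c; rewrite fadd /sharp cdot_addr (dual_add hD).
- move=> m h g hD gD; apply: sub_eq; rewrite svD !actPE //; last exact: (dual_addf hD gD).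
- move=> m h g hD gD; apply: sub_eq; rewrite !actPE //; last exact: dual_sharp.
  apply: (@funext C R) => c; change (g (cd c (sh (sv m) h)) = sh h g (cd c (sv m))).
  by rewrite cdot_sharp //; exact: PD (sP m).
- move=> m; apply: sub_eq; rewrite actPE; last exact: dual_eps.
  by apply: (@funext C R) => c; rewrite /sharp eps_cdot //; exact: PD (sP m).
Qed.
End DualSub.

Lemma dual_closed : zclosed dual.
Proof. split; [exact: dual0 | exact: dual_addf | exact: dual_oppf]. Qed.

Lemma Rat_cdot_lp (L : seq ((C -> R) * C)) y h :
  (forall p, List.In p L -> dual p.1) -> dual h ->
  (forall q, q \in Delta y -> q.2 = \sum_(p <- L) la (p.1 q.2) p.2) ->
  cd y h = \sum_(p <- L) ra (cd y p.1) (h p.2).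
Proof.
move=> HL hD HD.
transitivity (\sum_(q <- Delta y) \sum_(p <- L) ra (ra q.1 (p.1 q.2)) (h p.2)).
  rewrite /cdot; apply: eq_big_seq => q hq; rewrite {1}(HD q hq).
  rewrite (dual_sumv _ _ hD) (additive_sum _ _ (ra_addr _)).
  by apply: eq_bigr => p _; rewrite (dual_la _ _ hD) raM.
rewrite exchange_big; apply: eq_bigr => p _.
by rewrite /cdot (additive_sum _ _ (ra_add _)).
Qed.

Section Exact.
Variables (f : C -> R) (F : seq C).
Hypothesis fD : dual f.
Definition vv (g : C -> R) : nat -> C := fun k => cd (nth 0 F k) g.
Definition P3 (x : nat -> C) := exists g, dual g /\ x = vv g.
Lemma P3_closed : zclosed P3.
Proof.
split.
- exists 0; split; first exact: dual0.
  by apply: (@funext nat C) => k; rewrite /vv cdot_0r.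
- move=> x y [g [gD ->]] [g' [gD' ->]]; exists (g + g'); split; first exact: dual_addf.
  by apply: (@funext nat C) => k; rewrite /vv fadd cdot_addr.
- move=> x [g [gD ->]]; exists (- g); split; first exact: dual_oppf.
  by apply: (@funext nat C) => k; rewrite /vv fopp cdot_oppr.
Qed.
Definition P1 (g : C -> R) := dual g /\ vv g = 0.
Lemma P1_closed : zclosed P1.
Proof.
split.
- split; first exact: dual0.
  by apply: (@funext nat C) => k; rewrite /vv cdot_0r.
- move=> x y [xD xv] [yD yv]; split; first exact: dual_addf.
  apply: (@funext nat C) => k; rewrite /vv cdot_addr.
  move: (congr1 (fun z => z k) xv) (congr1 (fun z => z k) yv).
  by rewrite /vv /= => -> ->; rewrite addr0.
- move=> x [xD xv]; split; first exact: dual_oppf.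
  apply: (@funext nat C) => k; rewrite /vv cdot_oppr.
  move: (congr1 (fun z => z k) xv).
  by rewrite /vv /= => ->; rewrite oppr0.
Qed.
Lemma P1_dual g : P1 g -> dual g. Proof. by case. Qed.
Lemma P1_sh g h : P1 g -> dual h -> P1 (sh g h).
Proof.
move=> [gD gv] hD; split; first exact: dual_sharp.
apply: (@funext nat C) => k; rewrite /vv cdot_sharp //.
have := congr1 (fun z => z k) gv => /= E; rewrite /vv in E; rewrite E.
exact: cdot0.
Qed.
Lemma P2_sh g h : dual g -> dual h -> dual (sh g h).
Proof. exact: dual_sharp. Qed.

Let M1 := sub P1_closed.
Let M2 := sub dual_closed.
Let M3 := sub P3_closed.
Let act1 := actP (HP:=P1_closed) P1_sh.
Let act2 := actP (HP:=dual_closed) P2_sh.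

Lemma P3_act (x : M3) h : dual h -> P3 (fun k => cd (sv x k) h).
Proof.
move=> hD; case: (sP x) => g [gD E]; exists (sh g h); split; first exact: dual_sharp.
by apply: (@funext nat C) => k; rewrite E /vv cdot_sharp.
Qed.
Definition act3 (x : M3) (h : C -> R) : M3 :=
  match pselect (dual h) with
  | left hD => Sub P3_closed (P3_act x hD)
  | right _ => x end.
Lemma act3E x h : dual h -> sv (act3 x h) = fun k => cd (sv x k) h.
Proof. by move=> hD; rewrite /act3; case: pselect. Qed.
Lemma act3_mod : right_dual_mod la ra Delta eps act3.
Proof.
split.
- move=> m m' h hD; apply: sub_eq; rewrite svD !act3E // svD.
  by apply: (@funext nat C) => k; rewrite fadd cdotD.
- move=> m h g hD gD; apply: sub_eq; rewrite svD !act3E //; last exact: (dual_addf hD gD).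
  by apply: (@funext nat C) => k; rewrite fadd cdot_addr.
- move=> m h g hD gD; apply: sub_eq; rewrite !act3E //; last exact: dual_sharp.
  by apply: (@funext nat C) => k; rewrite cdot_sharp.
- move=> m; apply: sub_eq; rewrite act3E; last exact: dual_eps.
  by apply: (@funext nat C) => k; rewrite cdot_eps.
Qed.

Definition uu (g : M1) : M2 := Sub dual_closed (P1_dual (sP g)).
Definition vv3 (g : M2) : M3 := Sub P3_closed (ex_intro _ (sv g) (conj (sP g) erefl)).

Lemma exact_cadic_step : left_alpha la -> Rat_exact la ra Delta eps ->
  exists g, [/\ dual g, Rat_dual la ra Delta g &
                  forall c, c \in F -> cd c g = cd c f].
Proof.
move=> Hal HE.
have H1 : right_dual_mod la ra Delta eps act1 := actP_mod P1_closed P1_dual P1_sh.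
have H2 : right_dual_mod la ra Delta eps act2 :=
  actP_mod dual_closed (fun g (h : dual g) => h) P2_sh.
have Hu : dual_mod_hom la act1 act2 uu.
  split=> [x y|m h hD]; apply: sub_eq => //.
  by rewrite /= !actPE.
have Hv : dual_mod_hom la act2 act3 vv3.
  split=> [x y|m h hD]; apply: sub_eq.
    by apply: (@funext nat C) => k; rewrite /= fadd /vv cdot_addr.
  rewrite act3E //= actPE //.
  by apply: (@funext nat C) => k; rewrite /vv cdot_sharp //; exact: (sP m).
have uI : injective uu.
  by move=> x y E; apply: sub_eq; exact: (congr1 (@sv _ _ _) E).
have vS : forall m3 : M3, exists m2, vv3 m2 = m3.
  move=> m3; case: (sP m3) => g [gD E].
  by exists (Sub dual_closed gD); apply: sub_eq; rewrite /= E.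
have Hex : forall m2, vv3 m2 = 0 <-> exists m1, uu m1 = m2.
  move=> m2; split=> [E|[m1 <-]].
    have E' : vv (sv m2) = 0 by have := congr1 (@sv _ _ _) E.
    by exists (Sub P1_closed (conj (sP m2) E')); apply: sub_eq.
  by apply: sub_eq; case: (sP m1) => _ E; exact: E.
have [_ _ HE3] := HE M1 M2 M3 act1 act2 act3 uu vv3 H1 H2 act3_mod Hu Hv uI vS Hex.
pose fM : M2 := Sub dual_closed fD.
pose D := flatten [seq [seq q.2 | q <- Delta (cd c f)] | c <- F].
have [L [HL HLD]] := loc_proj D Hal.
have Hr : Rat_mod la eps act3 (vv3 fM).
  exists [seq (act3 (vv3 fM) p.1, p.2) | p <- L] => h hD.
  rewrite big_map; apply: sub_eq; rewrite sv_sum act3E //.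
  apply: (@funext nat C) => k; rewrite fsum.
  transitivity (\sum_(p <- L) ra (cd (vv f k) p.1) (h p.2)); last first.
    apply: eq_big_In => p hp; rewrite act3E; last exact: dual_iota.
    by rewrite act3E ?cdot_iota //; exact: HL.
  rewrite /=; case: (ltnP k (size F)) => hk.
    apply: Rat_cdot_lp => // q hq; apply: HLD; apply/flattenP.
    exists [seq q.2 | q <- Delta (cd (nth 0 F k) f)]; last exact: map_f.
    by apply: (map_f (fun c => [seq q0.2 | q0 <- Delta (cd c f)])); rewrite mem_nth.
  rewrite /vv nth_default // cdot0 // cdot0 //.
  rewrite (eq_big_In (G := fun _ => 0)); first by rewrite big1.
  by move=> p hp; rewrite cdot0 ?ra0 //; exact: (HL p hp).
have [m2 [Hm2 E]] := HE3 _ Hr.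
exists (sv m2); split.
- exact: (sP m2).
- case: Hm2 => s Hs; exists [seq (sv p.1, p.2) | p <- s]; split.
    by move=> p hp; have [q [<- _]] := In_map hp; exact: (sP q.1).
  move=> h hD c; rewrite big_map.
  have E1 : sv (act2 m2 h) c = sv (\sum_(p <- s) act2 p.1 (iota eps (h p.2))) c.
    by rewrite (Hs h hD).
  rewrite actPE // sv_sum fsum in E1; rewrite E1.
  apply: eq_bigr => p _; rewrite actPE; last exact: dual_iota.
  by rewrite sharp_iota //; exact: (sP p.1).
- move=> c hc; have := congr1 (fun m => sv m (index c F)) E.
  by rewrite /= /vv nth_index.
Qed.
End Exact.
End Base.

Theorem proposition2p3 (R : pzRingType) (C : zmodType)
    (la : R -> C -> C) (ra : C -> R -> C)
    (Delta : C -> seq (C * C)) (eps : C -> R)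
    (Hcoring : is_coring la ra Delta eps)
    (Halpha : left_alpha la) :
  (Rat_dense_Cadic la ra Delta <-> Rat_dense_finite la ra Delta) /\
  (Rat_dense_finite la ra Delta <-> Rat_exact la ra Delta eps).
Proof.
split; split.
- exact: (cadic_finite Hcoring).
- exact: finite_cadic.
- exact: (dense_exact Hcoring).
- move=> HE; apply: (cadic_finite Hcoring) => f fD F.
  exact: (exact_cadic_step Hcoring F fD Halpha HE).
Qed.
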